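(* Fix a complex number $q$ with $0<|q|<1$ and an integer $k\ge0$, and let $\tilde\sigma_{-k-1}(x)=\frac{(-1)^kq^{\binom{k+1}{2}}}{(x;q)_{k+1}(qx^{-1};q)_k}$. Then the meromorphic differential $\tilde\sigma_{-k-1}(x)\,dx$ on $\mathbb{CP}^1$ has simple poles at $x=q^j$ for $j=0,\pm1,\dots,\pm k$, with \[ \operatorname{Res}_{x=q^j}\tilde\sigma_{-k-1}\,dx=-\frac{(-1)^{k+j}q^{\binom{j+1}{2}+\binom{k+1}{2}}}{(q;q)_{k-j}\,(q;q)_{k+j}}, \] where $\binom{j+1}{2}=\frac{j(j+1)}{2}$ also for negative $j$. Additionally, $\tilde\sigma_{-1}(x)\,dx$ has a simple pole at $x=\infty$ with $\operatorname{Res}_{x=\infty}\tilde\sigma_{-1}\,dx=1$.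
   Context: $(a;q)_n=\prod_{j=0}^{n-1}(1-aq^j)$ denotes the $q$-Pochhammer symbol. *)

(* Defs.v *)
From HB Require Import structures.
From mathcomp Require Import all_boot all_order all_algebra.
From mathcomp Require Import complex.
From mathcomp Require Import all_classical all_reals topology normedtype.
Set Implicit Arguments. Unset Strict Implicit. Unset Printing Implicit Defensive.
Import Order.TTheory GRing.Theory Num.Theory.
Import numFieldNormedType.Exports.
Local Open Scope classical_set_scope.
Local Open Scope ring_scope.

Definition qpoch {F : comPzRingType} (a q : F) (n : nat) : F :=
  \prod_(j < n) (1 - a * q ^+ j).

Definition sigma_tilde {F : fieldType} (q : F) (k : nat) (x : F) : F :=
  (-1) ^+ k * q ^+ 'C(k.+1, 2) / (qpoch x q k.+1 * qpoch (q / x) q k).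

(* The meromorphic differential f(x) dx has a simple pole at the finite
   point a with residue r: (x - a) f(x) tends to r as x -> a (x <> a),
   and r <> 0 (so the pole is genuinely of order exactly one). *)
Definition simple_pole_res {K : numFieldType} (f : K -> K) (a r : K) : Prop :=
  r != 0 /\ ((fun x => (x - a) * f x) @ a^' --> r).

(* The differential f(x) dx has a simple pole at x = infinity with residue r:
   in the chart w = 1/x, f(x) dx = f(1/w) (-1/w^2) dw, which must have a
   simple pole at w = 0 with residue r. *)
Definition simple_pole_res_infty {K : numFieldType} (f : K -> K) (r : K) : Prop :=
  simple_pole_res (fun w => f w^-1 * (- w ^- 2)) 0 r.

(* Main.v *)
Require Import Defs.
From HB Require Import structures.
From mathcomp Require Import all_boot all_order all_algebra.
From mathcomp Require Import complex.
From mathcomp Require Import all_classical all_reals topology normedtype.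
From mathcomp Require Import ring zify.
Import Order.TTheory GRing.Theory Num.Theory.
Import numFieldNormedType.Exports.
Local Open Scope classical_set_scope.
Local Open Scope ring_scope.
Section S.
Variable F : fieldType.

Lemma sumrev k : (\sum_(0 <= i < k.+1) (k - i))%N = 'C(k.+1, 2).
Proof.
rewrite big_nat_rev -bin2_sum; apply: eq_big_nat => i /andP[_ hi] /=; lia.
Qed.

Lemma keyA (q x : F) k : q^+'C(k.+1,2) * qpoch x q k.+1 =
  \prod_(0 <= i < k.+1) (q^+i - x * q^+k).
Proof.
rewrite big_nat_rev /=.
rewrite (eq_big_nat _ _ (F2 := fun i => q ^+ (k - i) * (1 - x * q ^+ i))); last first.
  move=> i /andP[_ hi]; rewrite add0n subSS.
  rewrite mulrBr mulr1 mulrCA -exprD subnK //; lia.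
rewrite big_split /= prodrXr sumrev /qpoch big_mkord //.
Qed.

Lemma keyB (q x : F) k : x != 0 -> (x * q^+k)^+k * qpoch (q / x) q k =
  \prod_(0 <= i < k) (x * q^+k - q^+(i + k.+1)).
Proof.
move=> hx.
have -> : (x*q^+k)^+k = \prod_(0<=i<k) (x*q^+k) by rewrite prodr_const_nat subn0.
rewrite /qpoch big_mkord -big_split big_mkord /=.
apply: eq_bigr => i _; rewrite exprD exprS; field; done.
Qed.

Lemma keyC (q y : F) n : \prod_(0 <= i < n) (q^+i - y) =
  (-1)^+n * \prod_(0 <= i < n) (y - q^+i).
Proof.
have -> : (-1)^+n = \prod_(0<=i<n) (-1 : F) by rewrite prodr_const_nat subn0.
rewrite -big_split /=.
by apply: eq_bigr => i _; rewrite mulN1r opprB.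
Qed.

Lemma keyD (q x : F) k : x != 0 ->
  q^+'C(k.+1,2) * (x*q^+k)^+k * (qpoch x q k.+1 * qpoch (q/x) q k) =
  (-1)^+k.+1 * \prod_(0 <= i < k.+1 + k) (x*q^+k - q^+i).
Proof.
move=> hx.
rewrite mulrACA keyA keyB // keyC -mulrA; congr (_ * _).
rewrite [RHS](big_cat_nat _ (n := k.+1)) //=; last lia.
congr (_ * _).
by rewrite (big_addn 0 (k.+1 + k) k.+1) addKn.
Qed.

Lemma sigmaE (q x : F) k : q != 0 -> x != 0 ->
  sigma_tilde q k x = - (q^+'C(k.+1,2) * (q^+'C(k.+1,2) * (x*q^+k)^+k)) /
     \prod_(0 <= i < k.+1 + k) (x*q^+k - q^+i).
Proof.
move=> hq hx; rewrite /sigma_tilde.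
set D := (qpoch x q k.+1 * qpoch (q/x) q k).
set Q := \prod_(_ <= i < _) _.
set c := q ^+ 'C(k.+1, 2) * (x * q ^+ k) ^+ k.
have hc : c != 0 by rewrite !(mulf_neq0, expf_neq0).
have hD : D = (-1)^+k.+1 * Q / c.
  by rewrite -keyD // /c mulrC mulKf.
rewrite hD exprS.
have hs : (-1) ^+ k != 0 :> F by rewrite signr_eq0.
have [->|hQ] := eqVneq Q 0; first by rewrite !(mulr0, mul0r, invr0, oppr0).
rewrite /c; field; rewrite ?hs ?hQ ?hq //.
by rewrite !(mulf_neq0, expf_neq0) // oppr_eq0 oner_eq0.
Qed.

Lemma Q1val (q : F) m : \prod_(0 <= i < m) (q^+m - q^+i) =
  (-1)^+m * q^+'C(m,2) * qpoch q q m.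
Proof.
rewrite (eq_big_nat _ _ (F2 := fun i => ((-1) * q^+i) * (1 - q^+(m - i)))); last first.
  move=> i /andP[_ hi]; rewrite mulN1r mulrBr mulr1 mulNr -exprD subnKC; last lia.
  by rewrite opprK addrC.
rewrite big_split big_split /= prodr_const_nat subn0 prodrXr bin2_sum.
congr (_ * _).
rewrite big_nat_rev /qpoch -(big_mkord xpredT (fun j => 1 - q * q ^+ j)).
apply: eq_big_nat => i /andP[_ hi]; rewrite add0n -exprS; congr (1 - q ^+ _); lia.
Qed.

Lemma Q2val (q : F) m N : (m < N)%N -> \prod_(m.+1 <= i < N) (q^+m - q^+i) =
  q^+(m * (N - m.+1)) * qpoch q q (N - m.+1).
Proof.
move=> hmN.
rewrite (big_addn 0 N m.+1).
rewrite (eq_big_nat _ _ (F2 := fun i => q^+m * (1 - q * q^+i))); last first.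
  by move=> i _; rewrite mulrBr mulr1 -exprS -exprD; congr (_ - q ^+ _); lia.
by rewrite big_split /= prodr_const_nat subn0 exprM /qpoch big_mkord.
Qed.
End S.

Section T.
Variable K : numFieldType.

Lemma pow_neq1 (q : K) n : `|q| < 1 -> (0 < n)%N -> q ^+ n != 1.
Proof.
move=> hq hn; apply/eqP => h.
have := congr1 (fun z => `|z|) h; rewrite /= normrX normr1 => e.
have := exprn_ilt1 n (normr_ge0 q) hq; rewrite e ltxx => /esym/negP; apply.
by move/eqP => n0; rewrite n0 in hn.
Qed.

Lemma pow_inj (q : K) a b : 0 < `|q| < 1 -> a != b -> q ^+ a != q ^+ b.
Proof.
move=> /andP[h0 h1].
have hq : q != 0 by rewrite -normr_gt0.
wlog hab : a b / (a < b)%N.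
  move=> W ne; case: (ltngtP a b) => [h|h|h]; first exact: W.
  - by rewrite eq_sym W // eq_sym.
  - by rewrite h eqxx in ne.
move=> _; apply/eqP => e.
have : q ^+ (b - a) = 1.
  apply: (mulfI (expf_neq0 a hq)); rewrite -exprD subnKC ?mulr1 ?e //; lia.
by apply/eqP; apply: pow_neq1 => //; lia.
Qed.

Lemma qpoch_neq0 (q : K) n : 0 < `|q| < 1 -> qpoch q q n != 0.
Proof.
move=> hq; rewrite /qpoch; apply/prodf_neq0 => i _.
by rewrite -exprS subr_eq0 -(expr0 q) pow_inj.
Qed.

Lemma cvg_prod (T : Type) (G : set_system T) (FG : Filter G) (I : Type) (r : seq I)
  (f : I -> T -> K) (l : I -> K) :
  (forall i, f i x @[x --> G] --> l i) ->
  (\prod_(i <- r) f i x) @[x --> G] --> \prod_(i <- r) l i.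
Proof.
move=> h; elim: r => [|i r IH].
  rewrite big_nil; under eq_cvg do rewrite big_nil; exact: cvg_cst.
rewrite big_cons; under eq_cvg do rewrite big_cons.
exact: cvgM.
Qed.
End T.

Lemma bin2x n : ('C(n,2) * 2 + n = n * n)%N.
Proof.
elim: n => [|n IH] //; rewrite binS bin1; lia.
Qed.

Lemma cvg_exp (K : numFieldType) (T : Type) (G : set_system T) (FG : Filter G)
  (f : T -> K) (l : K) n :
  f x @[x --> G] --> l -> (f x ^+ n) @[x --> G] --> l ^+ n.
Proof.
move=> h; elim: n => [|n IH].
  rewrite expr0; under eq_cvg do rewrite expr0; exact: cvg_cst.
rewrite exprS; under eq_cvg do rewrite exprS.
exact: cvgM.
Qed.

Theorem lemma5p1 (R : realType) (q : R[i]) (k : nat) :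
  0 < `|q| < 1 ->
  (forall j : int, - (k%:Z) <= j <= k%:Z ->
     simple_pole_res (sigma_tilde q k) (q ^ j)
       (- ((-1) ^+ (absz (k%:Z + j)) * q ^ ((j * (j + 1)) %/ 2)%Z * q ^+ 'C(k.+1, 2)
           / (qpoch q q (absz (k%:Z - j)) * qpoch q q (absz (k%:Z + j))))))
  /\ simple_pole_res_infty (sigma_tilde q 0) 1.
Proof.
move=> hq.
have hq0 : q != 0 by rewrite -normr_gt0; case/andP: hq.
split.
  move=> j /andP[hjl hjr].
  set cK := 'C(k.+1, 2).
  set m := absz (k%:Z + j); set n := absz (k%:Z - j).
  have hm : (m : int) = k%:Z + j by rewrite /m; lia.
  have hn : (n : int) = k%:Z - j by rewrite /n; lia.
  have hmN : (m < k.+1 + k)%N by lia.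
  have hnN : (k.+1 + k - m.+1 = n)%N by lia.
  set a : R[i] := q ^ j.
  have ha : a * q ^+ k = q ^+ m.
    by rewrite /a (_ : q ^+ k = q ^ (k%:Z)) // -expfzDr // addrC -hm.
  have ha0 : a != 0 by rewrite expfz_neq0.
  pose Q1 (y : R[i]) := \prod_(0 <= i < m) (y - q ^+ i).
  pose Q2 (y : R[i]) := \prod_(m.+1 <= i < k.+1 + k) (y - q ^+ i).
  pose G (x : R[i]) := - (q ^+ cK * (q ^+ cK * (x * q ^+ k) ^+ k)) /
     (q ^+ k * (Q1 (x * q ^+ k) * Q2 (x * q ^+ k))).
  have hQ1 : Q1 (q ^+ m) = (-1)^+m * q^+'C(m,2) * qpoch q q m by rewrite /Q1 Q1val.
  have hQ2 : Q2 (q ^+ m) = q^+(m * n) * qpoch q q n by rewrite /Q2 Q2val // hnN.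
  have hqm := @qpoch_neq0 _ q m hq; have hqn := @qpoch_neq0 _ q n hq.
  have hs : forall l, (-1) ^+ l != 0 :> R[i] by move=> l; rewrite signr_eq0.
  have hden : q ^+ k * (Q1 (a * q ^+ k) * Q2 (a * q ^+ k)) != 0.
    by rewrite ha hQ1 hQ2; repeat apply: mulf_neq0; rewrite ?expf_neq0 ?hs ?oppr_eq0 ?oner_eq0.
  have Gval : G a = - ((-1) ^+ m * q ^ ((j * (j + 1)) %/ 2)%Z * q ^+ cK
           / (qpoch q q n * qpoch q q m)).
    rewrite /G ha hQ1 hQ2.
    have hb1 := bin2x k.+1; have hb2 := bin2x m.
    have h2 : j * (j + 1) = ((cK + m * k)%N%:Z - ('C(m,2) + m * n + k)%N%:Z) * 2.
      rewrite /cK; lia.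
    rewrite h2 mulzK // expfzDr // -exprnN -!exprnP.
    rewrite !exprD !exprM !invfM invr_sign.
    field.
    by rewrite ?hqm ?hqn ?expf_neq0.
  split.
    by rewrite oppr_eq0 invfM !mulf_neq0 ?invr_eq0 ?expfz_neq0 ?expf_neq0 ?hs ?oppr_eq0 ?oner_eq0.
  suff L : (x - a) * sigma_tilde q k x @[x --> (a : Num.NumField.sort _)^'] --> (G a : Num.NumField.sort _) by rewrite Gval in L; exact: L.
  have E1 : \forall x \near (a : Num.NumField.sort _)^', G x = (x - a) * sigma_tilde q k x.
    have nz : \forall x \near (a : Num.NumField.sort _)^', x != 0.
      exact: (@cvgr_neq0 _ _ _ _ _ (fun x : Num.NumField.sort _ => x) (a : Num.NumField.sort _) (cvg_within_filter _ (@cvg_id _ (nbhs (a : Num.NumField.sort _)))) ha0).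
    near=> x.
    have xa : x != a by near: x; exact: (nbhs_dnbhs_neq (a : Num.NumField.sort _)).
    have x0 : x != 0 by near: x; exact: nz.
    rewrite /G sigmaE // (big_cat_nat _ (n := m)) //=; last lia.
    rewrite (big_cat_nat _ (n := m.+1) (m := m) (p := k.+1 + k)) //= big_nat1.
    set y := x * q ^+ k.
    have hd : y - q ^+ m != 0 by rewrite -ha /y -mulrBl mulf_neq0 ?subr_eq0 ?expf_neq0.
    have hxa : x - a = (y - q ^+ m) / q ^+ k by rewrite -ha /y -mulrBl mulfK ?expf_neq0.
    rewrite hxa /Q1 /Q2 !invfM.
    set u := (y - q ^+ m)^-1.
    have hu : (y - q ^+ m) * u = 1 by apply: mulfV.
    by rewrite -[LHS]mul1r -hu; ring.
  apply: cvg_trans (near_eq_cvg E1) _.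
  apply: cvg_within_filter.
  apply: cvgM; first by apply: cvgN; apply: cvgM; first exact: cvg_cst;
    apply: cvgM; first exact: cvg_cst; apply: cvg_exp; apply: cvgM; [exact: cvg_id | exact: cvg_cst].
  apply: cvgV => //.
  apply: cvgM; first exact: cvg_cst.
  apply: cvgM; apply: cvg_prod => i; (apply: cvgB; last exact: cvg_cst);
    (apply: cvgM; [exact: cvg_id | exact: cvg_cst]).
rewrite /simple_pole_res_infty /simple_pole_res; split; first exact: oner_neq0.
have E : \forall w \near (0 : Num.NumField.sort R[i])^',
    (1 - w)^-1 = (w - 0) * (sigma_tilde q 0 w^-1 * - w ^- 2).
  near=> w.
  have w0 : w != 0 by near: w; exact: (nbhs_dnbhs_neq (0 : Num.NumField.sort R[i])).
  rewrite /sigma_tilde /qpoch big_ord1 big_ord0 /= !expr0 !mulr1 !mul1r subr0.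
  have [->|w1] := eqVneq w 1; first by rewrite invr1 subrr !invr0 !mul0r mulr0.
  have w1' : 1 - w != 0 by rewrite subr_eq0 eq_sym.
  field.
  by rewrite w0 w1' subr_eq0 w1.
apply: cvg_trans (near_eq_cvg E) _.
apply: cvg_within_filter.
have L : (1 - x)^-1 @[x --> nbhs (0 : Num.NumField.sort R[i])] --> ((1 - 0)^-1 : Num.NumField.sort R[i]).
  apply: cvgV; first by rewrite subr0 oner_neq0.
  apply: cvgB; [exact: cvg_cst | exact: cvg_id].
rewrite subr0 invr1 in L; exact: L.
Unshelve. all: by end_near.
Qed.
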